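(* Let $\mathscr{A}$ be a finite alphabet, let $\Xi\subseteq\mathscr{A}^{\mathbb{Z}}$ be a periodically approximable subshift and let $(\Xi_k)_k$ be a sequence of periodic subshifts converging to $\Xi$. If $\Xi$ contains a non-periodic element, then the period $q_k=\#\Xi_k$ tends to infinity as $k\to\infty$.
   Context: $\mathscr{A}^{\mathbb{Z}}$ has the product topology and shift $(T\xi)(j)=\xi(j-1)$; a subshift is a non-empty closed $T$-invariant subset, and the set of subshifts carries the Hausdorff (Vietoris) topology (basis: $\{\Xi:\Xi\cap F=\emptyset,\Xi\cap O\neq\emptyset\ \forall O\in\mathcal{F}\}$, $F$ closed, $\mathcal{F}$ a finite family of open sets). $\eta$ is periodic if $T^n\eta=\eta$ for some $n\geq1$; a periodic subshift is $\mathrm{Orb}(\eta)=\{T^n\eta:n\in\mathbb{Z}\}$ for a periodic $\eta$. $\Xi$ is periodically approximable if some sequence of periodic subshifts converges to it. *)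

(* Defs.v *)
From Stdlib Require Import ZArith List.
From mathcomp Require Import all_boot.

Set Implicit Arguments.
Unset Strict Implicit.
Unset Printing Implicit Defensive.

Definition config (A : Type) := Z -> A.

Definition shift_by (A : Type) (n : Z) (xi : config A) : config A :=
  fun j => xi (j - n)%Z.

Definition shift (A : Type) (xi : config A) : config A := shift_by 1 xi.

(* Open sets of the product topology on A^Z (A finite, discrete):
   O is open iff around each of its points it contains a cylinder
   {eta | eta = xi on [-N, N]}. *)
Definition open_set (A : Type) (O : config A -> Prop) : Prop :=
  forall xi, O xi -> exists N : nat,
    forall eta, (forall j, (Z.abs j <= Z.of_nat N)%Z -> eta j = xi j) -> O eta.

Definition closed_set (A : Type) (F : config A -> Prop) : Prop :=
  open_set (fun xi => ~ F xi).

Definition subshift (A : Type) (Xi : config A -> Prop) : Prop :=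
  (exists xi, Xi xi) /\ closed_set Xi /\
  (forall xi, Xi xi <-> Xi (shift xi)).

Definition periodic (A : Type) (eta : config A) : Prop :=
  exists n : nat, (1 <= n)%N /\ shift_by (Z.of_nat n) eta = eta.

Definition Orb (A : Type) (eta : config A) : config A -> Prop :=
  fun xi => exists n : Z, xi = shift_by n eta.

Definition periodic_subshift (A : Type) (Xi : config A -> Prop) : Prop :=
  exists eta, periodic eta /\ (forall xi, Xi xi <-> Orb eta xi).

(* Convergence in the Hausdorff (Vietoris) topology on subshifts, with basis
   {Xi' : Xi' /\ F = empty, Xi' /\ O <> empty for all O in Fam}. *)
Definition vietoris_converges (A : Type) (Xis : nat -> config A -> Prop)
    (Xi : config A -> Prop) : Prop :=
  forall (F : config A -> Prop) (Fam : list (config A -> Prop)),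
    closed_set F -> (forall O, List.In O Fam -> open_set O) ->
    (forall xi, Xi xi -> ~ F xi) ->
    (forall O, List.In O Fam -> exists xi, Xi xi /\ O xi) ->
    exists K : nat, forall k, (K <= k)%N ->
      (forall xi, Xis k xi -> ~ F xi) /\
      (forall O, List.In O Fam -> exists xi, Xis k xi /\ O xi).

Definition periodically_approximable (A : Type) (Xi : config A -> Prop) : Prop :=
  exists Xis : nat -> config A -> Prop,
    (forall k, periodic_subshift (Xis k)) /\ vietoris_converges Xis Xi.

Definition has_card (A : Type) (S : config A -> Prop) (q : nat) : Prop :=
  exists l : list (config A), length l = q /\ List.NoDup l /\
    (forall xi, S xi <-> List.In xi l).

(* Main.v *)
Require Import Defs.
From Stdlib Require Import ZArith List.
From mathcomp Require Import all_boot.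
From Stdlib Require Import Lia Classical FunctionalExtensionality.

Lemma bounded_max (Q : nat -> nat -> Prop) :
  (forall i N N', le N N' -> Q i N -> Q i N') ->
  forall m, (forall i, lt i m -> exists N, Q i N) -> exists N, forall i, lt i m -> Q i N.
Proof.
  intros HQ m; induction m as [|m IH]; intros H.
  - exists 0. intros i Hi; lia.
  - destruct IH as [N1 HN1]. { intros i Hi; apply H; lia. }
    destruct (H m ltac:(lia)) as [N2 HN2].
    exists (Nat.max N1 N2). intros i Hi.
    destruct (Nat.eq_dec i m) as [->|Hne].
    + apply (HQ m N2); [lia|exact HN2].
    + apply (HQ i N1); [lia|apply HN1; lia].
Qed.

Lemma shift_inv (A : Type) (Xi : config A -> Prop) :
  subshift Xi -> forall xi, Xi xi -> forall n : nat, Xi (shift_by (Z.of_nat n) xi).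
Proof.
  intros [_ [_ Hs]] xi Hxi n; induction n as [|n IH].
  - replace (shift_by (Z.of_nat 0) xi) with xi; [exact Hxi|].
    apply functional_extensionality; intro t; unfold shift_by; f_equal; lia.
  - replace (shift_by (Z.of_nat (S n)) xi) with (Defs.shift (shift_by (Z.of_nat n) xi)).
    + apply (proj1 (Hs _)); exact IH.
    + apply functional_extensionality; intro t; unfold Defs.shift, shift_by; f_equal; lia.
Qed.

Theorem corollary5 (A : finType) (Xi : config A -> Prop)
  (Xis : nat -> config A -> Prop) :
  subshift Xi ->
  periodically_approximable Xi ->
  (forall k, periodic_subshift (Xis k)) ->
  vietoris_converges Xis Xi ->
  (exists xi, Xi xi /\ ~ periodic xi) ->
  forall M : nat, exists K : nat, forall k, (K <= k)%N ->
    forall q, has_card (Xis k) q -> (M <= q)%N.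
Proof.
  intros Hsub _ _ Hconv [xi [Hxi Hnp]] M.
  set D := fun i j N => exists t, (Z.abs t <= Z.of_nat N)%Z /\
             xi (t - Z.of_nat i)%Z <> xi (t - Z.of_nat j)%Z.
  assert (Dmono : forall i j N N', le N N' -> D i j N -> D i j N').
  { intros i j N N' HN [t [Ht1 Ht2]]; exists t; split; [lia|exact Ht2]. }
  assert (Dex : forall i j, lt i j -> exists N, D i j N).
  { intros i j Hij.
    assert (Hn : ~ (forall t, xi (t - Z.of_nat i)%Z = xi (t - Z.of_nat j)%Z)).
    { intro Hall. apply Hnp. exists (Nat.sub j i). split.
      - apply/leP. lia.
      - apply functional_extensionality; intro t; unfold shift_by.
        specialize (Hall (t + Z.of_nat i)%Z).
        replace (t + Z.of_nat i - Z.of_nat i)%Z with t in Hall by lia.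
        replace (t + Z.of_nat i - Z.of_nat j)%Z with (t - Z.of_nat (Nat.sub j i))%Z in Hall by lia.
        congruence. }
    apply not_all_ex_not in Hn. destruct Hn as [t Ht].
    exists (Z.to_nat (Z.abs t)). exists t. split; [lia|exact Ht]. }
  destruct (bounded_max (fun i N => forall j, lt j M -> lt i j -> D i j N))
    with (m := M) as [N HN].
  { intros i N N' HNN H j Hj Hij. eapply Dmono; [exact HNN|]. apply H; assumption. }
  { intros i Hi.
    destruct (bounded_max (fun j N => lt i j -> D i j N)) with (m := M) as [N HN].
    - intros j N N' HNN H Hij. eapply Dmono; [exact HNN|]. apply H; assumption.
    - intros j Hj. destruct (lt_dec i j) as [Hij|Hij].
      + destruct (Dex i j Hij) as [N HN]. exists N. intros _. exact HN.
      + exists 0. intros H; lia.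
    - exists N. intros j Hj Hij. apply HN; assumption. }
  set O := fun (i : nat) (eta : config A) =>
    forall t, (Z.abs t <= Z.of_nat N)%Z -> eta t = xi (t - Z.of_nat i)%Z.
  assert (Odisj : forall i j eta, lt i M -> lt j M -> O i eta -> O j eta -> i = j).
  { intros i j eta Hi Hj Hoi Hoj.
    destruct (lt_eq_lt_dec i j) as [[Hij|Hij]|Hij]; [|exact Hij|].
    - destruct (HN i Hi j Hj Hij) as [t [Ht1 Ht2]].
      exfalso; apply Ht2. rewrite <- (Hoi t Ht1), <- (Hoj t Ht1). reflexivity.
    - destruct (HN j Hj i Hi Hij) as [t [Ht1 Ht2]].
      exfalso; apply Ht2. rewrite <- (Hoi t Ht1), <- (Hoj t Ht1). reflexivity. }
  destruct (Hconv (fun _ => False) (List.map O (List.seq 0 M))) as [K HK].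
  - intros eta _. exists 0. intros eta' _ H; exact H.
  - intros O' HO'. apply in_map_iff in HO'. destruct HO' as [i [<- _]].
    intros eta Heta. exists N. intros eta' Heq t Ht. rewrite Heq; [|exact Ht]. apply Heta; exact Ht.
  - intros _ _ H; exact H.
  - intros O' HO'. apply in_map_iff in HO'. destruct HO' as [i [<- _]].
    exists (shift_by (Z.of_nat i) xi). split.
    + apply shift_inv; assumption.
    + intros t _. reflexivity.
  - exists K. intros k Hk q [l [Hlen [Hnd Hl]]].
    destruct (HK k Hk) as [_ Hmeet].
    assert (Hbuild : forall m, le m M -> exists l', length l' = m /\ NoDup l' /\
              incl l' l /\ forall eta, In eta l' -> exists i, lt i m /\ O i eta).
    { induction m as [|m IH]; intros Hm.
      - exists nil. split; [reflexivity|]. split; [constructor|]. split.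
        + intros x Hx; destruct Hx.
        + intros eta Hx; destruct Hx.
      - destruct (IH ltac:(lia)) as [l' [H1 [H2 [H3 H4]]]].
        destruct (Hmeet (O m)) as [eta [Heta Hom]].
        { apply in_map_iff. exists m. split; [reflexivity|]. apply in_seq. lia. }
        exists (eta :: l'). split; [simpl; congruence|]. split.
        + constructor; [|exact H2]. intro Hin.
          destruct (H4 eta Hin) as [i [Hi Hoi]].
          assert (i = m) by (apply (Odisj i m eta); auto; lia). lia.
        + split.
          * intros x [<-|Hx]; [apply Hl; exact Heta|apply H3; exact Hx].
          * intros x [<-|Hx]; [exists m; split; [lia|exact Hom]|].
            destruct (H4 x Hx) as [i [Hi Hoi]]. exists i; split; [lia|exact Hoi]. }
    destruct (Hbuild M (le_n M)) as [l' [H1 [H2 [H3 _]]]].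
    pose proof (NoDup_incl_length H2 H3). apply/leP. lia.
Qed.
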